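(* Consider the setting described in the context and assume $D>2$. For $t\ge 1$ let $\mathcal{I}_0(t)=\bigcup_{m=0}^{t-1}\mathcal{F}_0(m)$. Then for every $t\ge1$, $a_i(t)\le 2N$ for all $i\in\mathcal{I}_0(t)$.
   Context: $G=(V,E)$ is a finite connected undirected graph with node set $V=\{0,\dots,N-1\}$; $\mathcal{N}(i)$ denotes the set of neighbours of $i$. Every edge has length $1$, $d_{ij}$ is the hop distance between $i$ and $j$, and $\mathcal{F}_k(m)=\{i\in V : d_{ik}=m\}$. Every node carries value $v_i=1$. The source set is $S(t)=\{D-1\}$ for $t\le 0$ and $S(t)=\{0\}$ for $t\ge 1$. The integer $D$ satisfies $\max_{i\in V}d_{i0}=D-1$, and nodes are labelled so that $0,1,\dots,D-1$ is a path in which node $i$ is a neighbour of $i+1$ with $d_{0,i}=i$ for $0\le i\le D-1$. The algorithm updates, for $t\ge1$: $\hat d_i(t)=0$ if $i\in S(t)$, and $\hat d_i(t)=\min_{j\in\mathcal{N}(i)}\{\hat d_j(t-1)+1\}$ otherwise; $c_i(t)=i$ if $i\in S(t)$, and otherwise $c_i(t)$ is a minimizer $j\in\mathcal{N}(i)$ of $\hat d_j(t-1)+1$; $C_i(t)=\{j : c_j(t-1)=i \text{ and } \hat d_j(t-1)=\hat d_i(t)+1\}$; $a_i(t)=\sum_{j\in C_i(t)}a_j(t-1)+v_i$. Initial values $(\hat d_i(0),c_i(0),a_i(0))$ are steady-state values of these recursions when the source set is constantly $\{D-1\}$; in particular $\hat d_i(0)=m$ for all $i\in\mathcal{F}_{D-1}(m)$,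 and for every integer $m$, $\sum_{i\in\mathcal{F}_{D-1}(m)}a_i(0)\le N$. *)

(* Defs.v *)
From mathcomp Require Import all_boot.
Set Implicit Arguments. Unset Strict Implicit. Unset Printing Implicit Defensive.

Section Graph.
Variables (T : finType) (e : rel T).

Fixpoint ball (k : nat) (i : T) : {set T} :=
  if k is k'.+1 then ball k' i :|: [set y | [exists x in ball k' i, e x y]]
  else [set i].

(* hop distance: least k with j in ball k i (well defined for connected graphs,
   where it is < #|T|) *)
Definition dist (i j : T) : nat := find (fun k => j \in ball k i) (iota 0 #|T|).

Definition simple_graph := symmetric e /\ irreflexive e.
Definition connected_graph := forall i j, connect e i j.

(* One update of the algorithm (for time t >= 1), from old values (d, c, a)
   at time t-1 to new values (d', c', a') at time t, with source set {src},
   and node values v_i = 1. *)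
Definition step (src : T) (d : T -> nat) (c : T -> T) (a : T -> nat)
  (d' : T -> nat) (c' : T -> T) (a' : T -> nat) : Prop :=
  forall i : T,
    [/\
        (if i == src then d' i = 0
         else (exists2 j, e i j & d' i = d j + 1) /\
              (forall j, e i j -> d' i <= d j + 1)),
        (if i == src then c' i = i
         else e i (c' i) /\ (forall j, e i j -> d (c' i) + 1 <= d j + 1)) &
        a' i = \sum_(j in [set j | (c j == i) && (d j == d' i + 1)]) a j + 1].

End Graph.

(* Main.v *)
Require Import Defs.
From mathcomp Require Import all_boot zify.
Set Implicit Arguments. Unset Strict Implicit. Unset Printing Implicit Defensive.

Lemma ball_succ (T : finType) (e : rel T) r k : ball e r k \subset ball e r.+1 k.
Proof. by rewrite /= subsetUl. Qed.

Lemma ball_self (T : finType) (e : rel T) r k : k \in ball e r k.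
Proof. elim: r => [|r IH]; first by rewrite /= in_set1. by rewrite /= in_setU IH. Qed.

Lemma ball_step (T : finType) (e : rel T) k j : e k j ->
  forall r, ball e r j \subset ball e r.+1 k.
Proof.
move=> ekj; elim=> [|r IH].
  apply/subsetP=> y; rewrite /= in_set1 => /eqP ->.
  by rewrite in_setU; apply/orP; right; rewrite inE; apply/existsP; exists k; rewrite in_set1 eqxx.
apply/subsetP=> y; rewrite [ball e r.+1 j]/= in_setU => /orP [H|].
  by apply: (subsetP (ball_succ e r.+1 k)); apply: (subsetP IH).
rewrite inE => /existsP [x /andP [xb exy]].
rewrite [ball e r.+2 k]/= in_setU; apply/orP; right; rewrite inE.
by apply/existsP; exists x; rewrite (subsetP IH) //.
Qed.

Lemma ball_back (T : finType) (e : rel T) r k y : y \in ball e r.+1 k ->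
  y = k \/ exists2 j, e k j & y \in ball e r j.
Proof.
elim: r y => [|r IH] y.
  rewrite /= in_setU in_set1 => /orP [/eqP->|]; first by left.
  rewrite inE => /existsP [x /andP [xb exy]]; right; exists y; last by rewrite /= in_set1.
  by move: xb; rewrite in_set1 => /eqP <-.
rewrite [ball e r.+2 k]/= in_setU => /orP [/IH [->|[j ekj yb]]|]; first by left.
  by right; exists j => //; apply: (subsetP (ball_succ e r j)).
rewrite inE => /existsP [x /andP [xb exy]].
case: (IH x xb) => [xk|[j ekj xbj]].
  right; exists y; first by rewrite -xk.
  exact: ball_self.
right; exists j => //; rewrite [ball e r.+1 j]/= in_setU; apply/orP; right; rewrite inE.
by apply/existsP; exists x; rewrite xbj.
Qed.

Lemma dist_le (T : finType) (e : rel T) r k x : x \in ball e r k -> dist e k x <= r.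
Proof.
move=> xb; rewrite /dist.
case: (ltnP r #|T|) => Hr.
  case: (leqP (find (fun k0 => x \in ball e k0 k) (iota 0 #|T|)) r) => // Hlt.
  have := before_find 0 Hlt; by rewrite nth_iota // add0n xb.
apply: leq_trans (find_size _ _) _; by rewrite size_iota.
Qed.

Lemma dist_size (T : finType) (e : rel T) k x : dist e k x <= #|T|.
Proof. by rewrite /dist; apply: leq_trans (find_size _ _) _; rewrite size_iota. Qed.

Lemma dist_ball (T : finType) (e : rel T) k x : dist e k x < #|T| ->
  x \in ball e (dist e k x) k.
Proof.
rewrite /dist => H.
have hs : has (fun k0 => x \in ball e k0 k) (iota 0 #|T|) by rewrite has_find size_iota.
have := nth_find 0 hs; by rewrite nth_iota ?add0n.
Qed.

Lemma dist_tri (T : finType) (e : rel T) k j x : e k j -> dist e k x <= (dist e j x).+1.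
Proof.
move=> ekj; case: (ltnP (dist e j x) #|T|) => H.
  by apply: dist_le; apply: (subsetP (ball_step ekj _)); apply: dist_ball.
by apply: leq_trans (dist_size e k x) _; apply: leq_trans H _.
Qed.

Lemma sum_children (T : finType) (P : pred T) (par : T -> T) (Q : T -> T -> bool)
  (R : pred T) (A : T -> nat) :
  (forall j, P (par j) -> Q j (par j) -> R j) ->
  \sum_(k | P k) \sum_(j in [set j | (par j == k) && Q j k]) A j <= \sum_(j | R j) A j.
Proof.
move=> HR.
have -> : \sum_(k | P k) \sum_(j in [set j | (par j == k) && Q j k]) A j =
          \sum_(k | P k) \sum_(j | (par j == k) && Q j k) A j.
  by apply: eq_bigr => k _; apply: eq_bigl => j; rewrite inE.
rewrite (exchange_big_dep R); last first.
  by move=> k j Pk /andP [/eqP pj Qj]; apply: HR; rewrite pj.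
apply: leq_sum => j Rj.
rewrite big_mkcond (bigD1 (par j)) //= big1 ?addn0.
  by case: ifP.
move=> k /negbTE kp; case: ifP => // /andP [_ /andP [/eqP pj _]].
by move: kp; rewrite pj eqxx.
Qed.

Fixpoint Wn (T : finType) (d : nat -> T -> nat) K s x : bool :=
  if s is s'.+1 then Wn d K s' x || ((d s x + s == K) && (d s x < s)) else false.

Fixpoint Vo (T : finType) (d : nat -> T -> nat) (rho : T -> nat) K s x : bool :=
  if s is s'.+1 then Vo d rho K s' x || ((d s x + s == K) && (s <= d s x))
  else K <= rho x.

Lemma WnP (T : finType) (d : nat -> T -> nat) K s x : Wn d K s x ->
  exists s', [/\ 0 < s', s' <= s, d s' x + s' = K & d s' x < s'].
Proof.
elim: s => [|s IH] //= /orP [/IH [s' [H1 H2 H3 H4]]|/andP [/eqP H1 H2]].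
  by exists s'; split => //; apply: leq_trans H2 _.
by exists s.+1; split.
Qed.

Lemma VoP (T : finType) (d : nat -> T -> nat) rho K s x : Vo d rho K s x ->
  K <= rho x \/ exists s', [/\ 0 < s', s' <= s, d s' x + s' = K & s' <= d s' x].
Proof.
elim: s => [|s IH] /=; first by left.
case/orP => [/IH [H|[s' [H1 H2 H3 H4]]]|/andP [/eqP H1 H2]]; first by left.
  by right; exists s'; split => //; apply: leq_trans H2 _.
by right; exists s.+1; split.
Qed.

Lemma sum1_le (T : finType) (P : pred T) : \sum_(x | P x) 1 <= #|T|.
Proof.
rewrite big_mkcond -sum1_card; apply: leq_sum => x _; by case: (P x).
Qed.
Unset Implicit Arguments. Set Strict Implicit. Set Printing Implicit Defensive.

Theorem lemma5 (n : nat) (e : rel 'I_n.+1) (D : nat)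
  (d : nat -> 'I_n.+1 -> nat) (c : nat -> 'I_n.+1 -> 'I_n.+1)
  (a : nat -> 'I_n.+1 -> nat) :
  simple_graph e ->
  connected_graph e ->
  2 < D ->
  D <= n.+1 ->
  \max_(i : 'I_n.+1) dist e i (inord 0) = D - 1 ->
  (forall k, k.+1 < D -> e (inord k) (inord k.+1)) ->
  (forall k, k < D -> dist e (inord 0) (inord k) = k) ->
  step e (inord (D - 1)) (d 0) (c 0) (a 0) (d 0) (c 0) (a 0) ->
  (forall i, d 0 i = dist e i (inord (D - 1))) ->
  (forall m, \sum_(i | dist e i (inord (D - 1)) == m) a 0 i <= n.+1) ->
  (forall t, step e (inord 0) (d t) (c t) (a t) (d t.+1) (c t.+1) (a t.+1)) ->
  forall t, 1 <= t ->
  forall i, dist e i (inord 0) <= t - 1 -> a t i <= 2 * n.+1.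
Proof.
move=> _ _ D2 DN hmax _ hpath h0 hd0 _ hstep t _ i _.
set z : 'I_n.+1 := inord 0.
set f : 'I_n.+1 := inord (D - 1).
have hd0' : forall i, d 0 i = dist e i f := hd0.
have hz : dist e z z = 0 by apply: hpath; lia.
have hdl : forall x : 'I_n.+1, dist e x z < #|'I_n.+1|.
  move=> x; rewrite card_ord; apply: leq_ltn_trans (_ : D - 1 < n.+1); last by lia.
  by rewrite -hmax; apply: (leq_bigmax x).
have D0 : forall s, d s.+1 z = 0.
  by move=> s; case: (hstep s z); rewrite eqxx.
have D1 : forall s (k j : 'I_n.+1), k != z -> e k j -> d s.+1 k <= d s j + 1.
  by move=> s k j kz ekj; case: (hstep s k); rewrite (negbTE kz) => [[_ H]] _ _; apply: H.
have D2' : forall s (k : 'I_n.+1), k != z -> exists2 j, e k j & d s.+1 k = d s j + 1.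
  by move=> s k kz; case: (hstep s k); rewrite (negbTE kz) => [[H _]] _ _.
have UB : forall r (k : 'I_n.+1), z \in ball e r k -> forall s, r < s -> d s k <= r.
  elim=> [|r IH] k.
    rewrite /= in_set1 => /eqP <- [|s] // _; by rewrite D0.
  move=> /ball_back [<-|[j ekj zb]] [|s] //; first by rewrite D0.
  move=> rs; case: (eqVneq k z) => [->|kz]; first by rewrite D0.
  apply: leq_trans (D1 _ _ _ kz ekj) _; rewrite addn1 ltnS; exact: IH.
have LB : forall s (k : 'I_n.+1), (dist e k z < s /\ dist e k z <= d s k) \/
                      (s <= d s k /\ dist e k f <= d s k).
  elim=> [|s IH] k; first by right; rewrite hd0'.
  case: (eqVneq k z) => [->|kz]; first by left; rewrite hz D0.
  case: (D2' s k kz) => j ekj ->.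
  case: (IH j) => [[H1 H2]|[H1 H2]].
    by left; have := dist_tri z ekj; lia.
  by right; have := dist_tri f ekj; lia.
have NEW : forall s (k : 'I_n.+1), d s k < s -> d s k = dist e k z.
  move=> s k H; case: (LB s k) => [[H1 H2]|[H1 H2]]; last by lia.
  have := UB _ _ (dist_ball (hdl k)) s H1; lia.
have OLD : forall s (k : 'I_n.+1), s <= d s k -> dist e k f <= d s k.
  move=> s k H; case: (LB s k) => [[H1 H2]|[H1 H2]] //.
  have := UB _ _ (dist_ball (hdl k)) s H1; lia.
have PER : forall s s' (k : 'I_n.+1), d s k < s -> s <= s' -> d s' k < s'.
  move=> s s' k H ss'; have := NEW _ _ H; case: (LB s k) => [[H1 H2]|[H1 H2]]; last by lia.
  have := UB _ _ (dist_ball (hdl k)) s' (leq_trans H1 ss'); lia.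
have MON : forall s (k : 'I_n.+1), s.+1 <= d s.+1 k -> d s k <= d s.+1 k.
  elim=> [|s IH] k.
    case: (eqVneq k z) => [->|kz]; first by rewrite D0.
    case: (D2' 0 k kz) => j ekj -> _; rewrite !hd0'; have := dist_tri f ekj; lia.
  case: (eqVneq k z) => [->|kz]; first by rewrite D0.
  case: (D2' s.+1 k kz) => j ekj -> H.
  have := IH j; have := D1 s k j kz ekj; lia.
have MONS : forall g s (k : 'I_n.+1), s + g <= d (s + g) k -> d s k <= d (s + g) k.
  elim=> [|g IH] s k; first by rewrite addn0.
  rewrite addnS => H.
  have H2 := MON _ _ H.
  case: (leqP (s + g) (d (s + g) k)) => H3.
    by apply: leq_trans (IH _ _ H3) H2.
  have := PER _ (s + g).+1 k H3 (leqnSn _); lia.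
have rho_le : forall x : 'I_n.+1, dist e x f <= n.+1.
  by move=> x; have := dist_size e x f; rewrite card_ord.
have STEADY : forall K, \sum_(k | dist e k f == K) a 0 k <= \sum_(x | K <= dist e x f) 1.
  suff H : forall g K, n.+2 <= K + g ->
      \sum_(k | dist e k f == K) a 0 k <= \sum_(x | K <= dist e x f) 1.
    by move=> K; apply: (H n.+2); lia.
  elim=> [|g IH] K HK.
    rewrite big_pred0 // => k; have := rho_le k; rewrite addn0 in HK.
    case: eqP => // H; lia.
  have IH1 := IH K.+1 ltac:(lia).
  have -> : \sum_(k | dist e k f == K) a 0 k =
     \sum_(k | dist e k f == K) (\sum_(j in [set j | (c 0 j == k) && (d 0 j == d 0 k + 1)]) a 0 j + 1).
    by apply: eq_bigr => k _; case: (h0 k).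
  rewrite big_split /=.
  have S1 := @sum_children _ (fun k => dist e k f == K) (c 0)
     (fun j k => d 0 j == d 0 k + 1) (fun j => dist e j f == K.+1) (a 0).
  have S1' : \sum_(k | dist e k f == K) \sum_(j in [set j | (c 0 j == k) && (d 0 j == d 0 k + 1)]) a 0 j
       <= \sum_(j | dist e j f == K.+1) a 0 j.
    apply: S1 => j /eqP H1 /eqP H2; apply/eqP; rewrite !hd0' in H2; lia.
  rewrite (bigID (fun x => dist e x f == K) (fun x => K <= dist e x f)) /= addnC.
  apply: leq_add.
    by apply: eq_leq; apply: eq_bigl => x; apply/idP/idP; lia.
  apply: leq_trans S1' (leq_trans IH1 _).
  by apply: eq_leq; apply: eq_bigl => x; apply/idP/idP; lia.
have MAIN : forall s K, \sum_(k | d s k + s == K) a s k <=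
    \sum_(x | Wn d K s x) 1 + \sum_(x | Vo d (fun x => dist e x f) K s x) 1.
  elim=> [|s IH] K.
    have -> : \sum_(x | Wn d K 0 x) 1 = 0 by rewrite big_pred0.
    rewrite add0n.
    apply: leq_trans (STEADY K); apply: eq_leq; apply: eq_bigl => k.
    by rewrite hd0' addn0.
  have -> : \sum_(k | d s.+1 k + s.+1 == K) a s.+1 k =
     \sum_(k | d s.+1 k + s.+1 == K)
        (\sum_(j in [set j | (c s j == k) && (d s j == d s.+1 k + 1)]) a s j + 1).
    by apply: eq_bigr => k _; case: (hstep s k).
  rewrite big_split /=.
  have S1 : \sum_(k | d s.+1 k + s.+1 == K)
       \sum_(j in [set j | (c s j == k) && (d s j == d s.+1 k + 1)]) a s j
       <= \sum_(j | d s j + s == K) a s j.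
    apply: (@sum_children _ (fun k => d s.+1 k + s.+1 == K) (c s)
      (fun j k => d s j == d s.+1 k + 1) (fun j => d s j + s == K) (a s)).
    move=> j /eqP H1 /eqP H2; apply/eqP; lia.
  have E1 : \sum_(x | Wn d K s.+1 x) 1 = \sum_(x | Wn d K s x) 1 +
        \sum_(x | (d s.+1 x + s.+1 == K) && (d s.+1 x < s.+1)) 1.
    rewrite (bigID (fun x => Wn d K s x)) /=; congr (_ + _).
      by apply: eq_bigl => x /=; case: (Wn d K s x); rewrite ?andbF ?andbT.
    apply: eq_bigl => x /=; case W: (Wn d K s x) => /=; last by rewrite andbT.
    symmetry; apply/negbTE/negP => /andP [/eqP H1 H2].
    case: (WnP W) => s' [H3 H4 H5 H6].
    have := NEW _ _ H2; have := NEW _ _ H6; lia.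
  have E2 : \sum_(x | Vo d (fun x => dist e x f) K s.+1 x) 1 =
        \sum_(x | Vo d (fun x => dist e x f) K s x) 1 +
        \sum_(x | (d s.+1 x + s.+1 == K) && ~~ (d s.+1 x < s.+1)) 1.
    rewrite (bigID (fun x => Vo d (fun x => dist e x f) K s x)) /=; congr (_ + _).
      by apply: eq_bigl => x /=; case: (Vo d (fun x => dist e x f) K s x); rewrite ?andbF ?andbT.
    apply: eq_bigl => x /=; case W: (Vo d (fun x => dist e x f) K s x) => /=.
      symmetry; apply/negbTE/negP => /andP [/eqP H1 H2].
      rewrite -leqNgt in H2.
      case: (VoP W) => [H|[s' [H3 H4 H5 H6]]].
        have := OLD _ _ H2; lia.
      have := MONS (s.+1 - s') s' x; rewrite subnKC; last by lia.
      move=> /(_ H2); lia.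
    by rewrite andbT -leqNgt.
  have E3 : \sum_(k | d s.+1 k + s.+1 == K) 1 =
      \sum_(x | (d s.+1 x + s.+1 == K) && (d s.+1 x < s.+1)) 1 +
      \sum_(x | (d s.+1 x + s.+1 == K) && ~~ (d s.+1 x < s.+1)) 1.
    by rewrite (bigID (fun x => d s.+1 x < s.+1)).
  rewrite E1 E2 E3.
  apply: leq_trans (leq_add (leq_trans S1 (IH K)) (leqnn _)) _.
  lia.
have hK := MAIN t (d t i + t).
have : a t i <= \sum_(k | d t k + t == d t i + t) a t k.
  by rewrite (bigD1 i) //= leq_addr.
move=> /leq_trans /(_ hK) H.
apply: leq_trans H _.
have := sum1_le (fun x => Wn d (d t i + t) t x).
have := sum1_le (fun x => Vo d (fun x => dist e x f) (d t i + t) t x).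
rewrite card_ord; lia.
Qed.
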